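(* Let $\mathcal{M}=(S,E,T)$ be a trivially parametric Markov chain satisfying the standing assumptions below, and let $\{S_0,\dots,S_m\}$ be an equivalence partition of $\mathcal{M}$. Then there exists a graph-preserving valuation $\mathsf{val}$ such that for all $0\le i<j\le m$, all $s_i\in S_i$ and all $s_j\in S_j$, $P_{\mathsf{val}}(s_i)<P_{\mathsf{val}}(s_j)$.
   Context: A trivially parametric Markov chain $\mathcal{M}=(S,E,T)$ consists of a finite set of states $S$, targets $T=\{\mathit{fin},\mathit{fail}\}$ with no outgoing edges, and edges $E\subseteq(S\setminus T)\times S$. A graph-preserving valuation assigns to each non-target $s$ a full-support probability distribution on its successor set $sE$; $P_{\mathsf{val}}(s)$ is the probability of reaching $\mathit{fin}$ from $s$. $s\sim s'$ iff $P_{\mathsf{val}}(s)=P_{\mathsf{val}}(s')$ for all graph-preserving valuations; $\tilde u$ is the equivalence class of $u$. An equivalence partition is a partition $\{S_0,\dots,S_m\}$ of $S$ into non-empty sets such that $S_0=\{\mathit{fail}\}$, $S_m=\{\mathit{fin}\}$, for every non-target $u$ we have $\tilde u\subseteq S_i$ for some $0<i<m$, and every $u\in S_j$ either has successors in some $S_i$ and some $S_k$ with $i<j<k$ or has all its successors in $S_j$. Standing assumptions: the equivalence classes of $\mathit{fin}$ and $\mathit{fail}$ are $\{\mathit{fin}\}$ and $\{\mathit{fail}\}$; no state has a self-loop; every non-target state has exactly two successors. *)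

(* Defs.v *)
From HB Require Import structures.
From mathcomp Require Import all_boot all_order all_algebra.
From mathcomp Require Import all_classical all_reals all_analysis.
Set Implicit Arguments. Unset Strict Implicit. Unset Printing Implicit Defensive.
Import Order.TTheory GRing.Theory Num.Theory numFieldNormedType.Exports.
Local Open Scope ring_scope.

Section MC.
Variables (R : realType) (S : finType) (fin fail : S) (E : rel S).

Definition is_target (s : S) : bool := (s == fin) || (s == fail).

(* A graph-preserving valuation: each non-target s gets a probability
   distribution on its successor set sE with full support.  Values at
   targets are irrelevant (targets have no outgoing edges). *)
Definition graph_preserving (val : S -> S -> R) : Prop :=
  forall s, ~~ is_target s ->
    [/\ forall t, E s t -> 0 < val s t,
        forall t, ~~ E s t -> val s t = 0
      & \sum_(t : S) val s t = 1].

Fixpoint reach_n (val : S -> S -> R) (n : nat) (s : S) : R :=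
  match n with
  | 0 => if s == fin then 1 else 0
  | n'.+1 => if s == fin then 1 else if s == fail then 0
             else \sum_(t : S) val s t * reach_n val n' t
  end.

(* P_val(s): probability of eventually reaching fin from s
   (limit of the nondecreasing bounded sequence reach_n). *)
Definition Pval (val : S -> S -> R) (s : S) : R :=
  limn (fun n => reach_n val n s).

Definition mc_equiv (s s' : S) : Prop :=
  forall val, graph_preserving val -> Pval val s = Pval val s'.

Definition standing_assumptions : Prop :=
  [/\ fin != fail,
      (forall t, ~~ E fin t /\ ~~ E fail t),
      (forall s, mc_equiv s fin -> s = fin) /\
      (forall s, mc_equiv s fail -> s = fail),
      (forall s, ~~ E s s)
    & (forall s, ~~ is_target s -> #|[set t | E s t]| = 2)].

(* An equivalence partition {S_0,...,S_m}, encoded by the block index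
   part : S -> 'I_m.+1 (S_i = {s | part s = i}). *)
Definition mc_equivalence_partition (m : nat) (part : S -> 'I_m.+1) : Prop :=
  [/\ (forall i : 'I_m.+1, exists s, part s = i),
      (forall s, (part s = ord0 <-> s = fail)),
      (forall s, (part s = ord_max <-> s = fin)),
      (forall u, ~~ is_target u ->
         (0 < (part u : nat))%N /\ ((part u : nat) < m)%N /\
         forall v, mc_equiv u v -> part v = part u)
    & (forall u,
         (exists v w, [/\ E u v, E u w, ((part v : nat) < part u)%N
                         & ((part u : nat) < part w)%N])
         \/ (forall v, E u v -> part v = part u))].

End MC.

(* Main.v *)
Require Import Defs.
From HB Require Import structures.
From mathcomp Require Import all_boot all_order all_algebra.
From mathcomp Require Import all_classical all_reals all_analysis.
From mathcomp Require Import ring lra.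
Import Order.TTheory GRing.Theory Num.Theory numFieldNormedType.Exports.
Set Implicit Arguments. Unset Strict Implicit.
Local Open Scope ring_scope.
Local Open Scope classical_set_scope.

Fixpoint hn (R : realType) (S : finType) (fin fail : S) (val : S -> S -> R)
  (n : nat) (s : S) : R :=
  if is_target fin fail s then 0 else
  match n with 0 => 1 | n'.+1 => \sum_(t : S) val s t * hn fin fail val n' t end.
Arguments hn {R S}.

Lemma val_ge0 (R : realType) (S : finType) (fin fail : S) (E : rel S) (val : S -> S -> R) s t :
  graph_preserving fin fail E val -> ~~ is_target fin fail s -> 0 <= val s t.
Proof.
move=> GP ns; have [Hp Hz _] := GP s ns.
case Est: (E s t); first by apply/ltW/Hp.
by rewrite Hz ?Est.
Qed.

Lemma hn_bnd (R : realType) (S : finType) (fin fail : S) (E : rel S) (val : S -> S -> R) n s :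
  graph_preserving fin fail E val -> 0 <= hn fin fail val n s <= 1.
Proof.
move=> GP; elim: n s => [|n IH] s /=; case: ifP => ns //=; rewrite ?lexx ?ler01 //.
have ns' : ~~ is_target fin fail s by rewrite ns.
have [_ _ H1] := GP s ns'.
apply/andP; split.
  apply: sumr_ge0 => t _; apply: mulr_ge0; first exact: val_ge0 GP ns'.
  by case/andP: (IH t).
rewrite -H1; apply: ler_sum => t _; apply: ler_piMr; first exact: val_ge0 GP ns'.
by case/andP: (IH t).
Qed.

Lemma hn_step (R : realType) (S : finType) (fin fail : S) (E : rel S) (val : S -> S -> R) n s :
  graph_preserving fin fail E val -> hn fin fail val n.+1 s <= hn fin fail val n s.
Proof.
move=> GP; elim: n s => [|n IH] s.
  by have /andP[_ ] := hn_bnd 1 s GP; rewrite /=; case: ifP.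
rewrite /=; case: ifP => ns //.
have ns' : ~~ is_target fin fail s by rewrite ns.
apply: ler_sum => t _; apply: ler_wpM2l; first exact: val_ge0 GP ns'.
exact: IH.
Qed.

Lemma hn_le (R : realType) (S : finType) (fin fail : S) (E : rel S) (val : S -> S -> R) n n' s :
  graph_preserving fin fail E val -> (n <= n')%N ->
  hn fin fail val n' s <= hn fin fail val n s.
Proof.
move=> GP /subnK <-; elim: (n' - n)%N => [|k IH]; first exact: lexx.
by rewrite addSn; apply: le_trans (hn_step _ _ GP) IH.
Qed.

Lemma hn_add (R : realType) (S : finType) (fin fail : S) (E : rel S) (val : S -> S -> R) a b s (H : R) :
  graph_preserving fin fail E val -> 0 <= H ->
  (forall t, hn fin fail val a t <= H) ->
  hn fin fail val (a + b) s <= H * hn fin fail val b s.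
Proof.
move=> GP H0 Ha; elim: b s => [|b IH] s.
  rewrite addn0 /=; case: ifP => ns; last by rewrite mulr1.
  by case: a Ha => [|a] /= _; rewrite ns mulr0.
rewrite addnS /=; case: ifP => ns; first by rewrite mulr0.
have ns' : ~~ is_target fin fail s by rewrite ns.
rewrite mulr_sumr; apply: ler_sum => t _.
rewrite mulrCA; apply: ler_wpM2l; first exact: val_ge0 GP ns'.
exact: IH.
Qed.

Lemma hn_pow (R : realType) (S : finType) (fin fail : S) (E : rel S) (val : S -> S -> R) N k s (q : R) :
  graph_preserving fin fail E val -> 0 <= q ->
  (forall t, hn fin fail val N t <= q) ->
  hn fin fail val (k * N) s <= q ^+ k.
Proof.
move=> GP q0 HN; elim: k s => [|k IH] s.
  by rewrite mul0n expr0; case/andP: (hn_bnd 0 s GP).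
rewrite mulSnr exprSr.
have := hn_add (a:=(k*N)%N) (H:=q^+k) N s GP (exprn_ge0 k q0) IH.
move/le_trans; apply.
by apply: ler_wpM2l; [exact: exprn_ge0 | exact: HN].
Qed.

Lemma hn_unif (R : realType) (S : finType) (fin fail : S) (E : rel S) (val : S -> S -> R) :
  graph_preserving fin fail E val ->
  (forall s, exists n, hn fin fail val n s < 1) ->
  exists N (q : R), [/\ 0 <= q, q < 1 & forall s, hn fin fail val N s <= q].
Proof.
move=> GP H.
suff Hl : forall l : seq S, exists N (q : R),
    [/\ 0 <= q, q < 1 & forall s, s \in l -> hn fin fail val N s <= q].
  have [N [q [q0 q1 Hq]]] := Hl (enum S).
  by exists N, q; split => // s; apply: Hq; rewrite mem_enum.
elim=> [|s l [N [q [q0 q1 Hl]]]]; first by exists 0%N, 0; split.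
have [n Hn] := H s.
exists (maxn N n), (Num.max q (hn fin fail val n s)); split.
- by rewrite le_max q0.
- by rewrite gt_max q1 Hn.
move=> t; rewrite inE => /orP[/eqP ->|tl].
  apply: le_trans (hn_le _ GP (leq_maxr N n)) _.
  by rewrite le_max lexx orbT.
apply: le_trans (hn_le _ GP (leq_maxl N n)) _.
by rewrite le_max Hl.
Qed.

Lemma hn_to0 (R : realType) (S : finType) (fin fail : S) (E : rel S) (val : S -> S -> R) :
  graph_preserving fin fail E val ->
  (forall s, exists n, hn fin fail val n s < 1) ->
  forall e : R, 0 < e -> exists M, forall n s, (M <= n)%N -> hn fin fail val n s <= e.
Proof.
move=> GP H e e0.
have [N [q [q0 q1 Hq]]] := hn_unif GP H.
have [k Hk] : exists k, q ^+ k <= e.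
  have : `|q| < 1 by rewrite ger0_norm.
  move/cvg_expr/cvgrPdist_le => /(_ e e0) [M _ HM]; exists M.
  have := HM M (leqnn M); rewrite sub0r normrN ger0_norm //; exact: exprn_ge0.
exists (k * N)%N => n s kn.
apply: le_trans (hn_le _ GP kn) _.
exact: le_trans (hn_pow k s GP q0 Hq) Hk.
Qed.

Lemma Pval_eq (R : realType) (S : finType) (fin fail : S) (E : rel S) (val : S -> S -> R)
  (f : S -> R) :
  graph_preserving fin fail E val ->
  (forall s, exists n, hn fin fail val n s < 1) ->
  fin != fail -> f fin = 1 -> f fail = 0 -> (forall s, 0 <= f s <= 1) ->
  (forall s, ~~ is_target fin fail s -> \sum_t val s t * f t = f s) ->
  forall s, Pval fin fail val s = f s.
Proof.
move=> GP H nff ffin ffail f01 harm.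
have D : forall n s, 0 <= f s - reach_n fin fail val n s <= hn fin fail val n s.
  elim=> [|n IH] s /=; rewrite /is_target.
    case: (eqVneq s fin) => [->|nf]; first by rewrite ?eqxx ?ffin ?subrr ?lexx.
    case: (eqVneq s fail) => [->|nfl] /=; first by rewrite ?eqxx ?(negPf nff) ?ffail ?subrr ?lexx.
    by rewrite /= subr0 f01.
  case: (eqVneq s fin) => [->|nf]; first by rewrite ?eqxx ?ffin ?subrr ?lexx.
  case: (eqVneq s fail) => [->|nfl] /=; first by rewrite ?eqxx ?(negPf nff) ?ffail ?subrr ?lexx.
  have ns : ~~ is_target fin fail s by rewrite /is_target (negPf nf) (negPf nfl).
  rewrite -(harm s ns) -sumrB.
  apply/andP; split.
    apply: sumr_ge0 => t _; rewrite -mulrBr; apply: mulr_ge0; first exact: val_ge0 GP ns.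
    by case/andP: (IH t).
  apply: ler_sum => t _; rewrite -mulrBr; apply: ler_wpM2l; first exact: val_ge0 GP ns.
  by case/andP: (IH t).
move=> s; rewrite /Pval; apply: cvg_lim => //.
apply/cvgrPdist_le => e e0.
have [M HM] := hn_to0 GP H e0.
exists M; first by [].
move=> n /= Mn; have /andP[D0 D1] := D n s.
rewrite ger0_norm //; exact: le_trans D1 (HM n s Mn).
Qed.

Lemma Pval0 (R : realType) (S : finType) (fin fail : S) (val : S -> S -> R) s :
  (forall n, reach_n fin fail val n s = 0) -> Pval fin fail val s = 0.
Proof.
move=> H; rewrite /Pval.
have -> : (fun n => reach_n fin fail val n s) = (fun _ => 0) by apply: funext.
exact: lim_cst.
Qed.

Lemma reach_hn (R : realType) (S : finType) (fin fail : S) (E : rel S) (val : S -> S -> R) :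
  standing_assumptions R fin fail E ->
  graph_preserving fin fail E val ->
  forall s, exists n, hn fin fail val n s < 1.
Proof.
move=> [nff noout [_ eqfail] noloop card2] GP s.
case: (pselect (exists n, hn fin fail val n s < 1)) => // Hno; exfalso.
pose P t := forall n, hn fin fail val n t = 1.
have Ps : P s.
  move=> n; apply/eqP; rewrite eq_le; case/andP: (hn_bnd n s GP) => _ -> /=.
  by rewrite leNgt; apply/negP => Hlt; apply: Hno; exists n.
have Pnt : forall t, P t -> ~~ is_target fin fail t.
  move=> t Pt; have := Pt 0%N; rewrite /=; case: ifP => // _ /eqP.
  by rewrite eq_sym oner_eq0.
have Pcl : forall t u, P t -> E t u -> P u.
  move=> t u Pt Etu n; have nt := Pnt t Pt.
  have [Hp _ H1] := GP t nt.
  have := Pt n.+1; rewrite /= (negPf nt) => Hs.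
  have H0 : \sum_v val t v * (1 - hn fin fail val n v) = 0.
    under eq_bigr => v _ do rewrite mulrBr mulr1.
    by rewrite sumrB H1 Hs subrr.
  have Hge : forall v, true -> 0 <= val t v * (1 - hn fin fail val n v).
    move=> v _; apply: mulr_ge0; first exact: val_ge0 GP nt.
    by rewrite subr_ge0; case/andP: (hn_bnd n v GP).
  have := psumr_eq0P Hge H0 (i:=u) isT.
  have -> : forall x y : R, x * y = 0 <-> x = 0 \/ y = 0.
    by move=> x y; split; [move/eqP; rewrite mulf_eq0 => /orP[] /eqP; by [left|right] | case=> ->; rewrite ?mul0r ?mulr0].
  case; first by move=> h; have := Hp u Etu; rewrite h ltxx.
  by move/eqP; rewrite subr_eq0 => /eqP <-.
have : mc_equiv R fin fail E s fail.
  move=> val' GP'.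
  have -> : Pval fin fail val' fail = 0.
    by apply: Pval0; case=> [|n] /=; rewrite ?eqxx eq_sym (negPf nff).
  apply: Pval0.
  suff Hr : forall n t, P t -> reach_n fin fail val' n t = 0 by move=> n; apply: Hr.
  elim=> [|n IH] t Pt /=; have := Pnt t Pt; rewrite /is_target negb_or => /andP[nf nfl].
    by rewrite (negPf nf).
  rewrite (negPf nf) (negPf nfl); apply: big1 => u _.
  case Etu: (E t u); first by rewrite (IH u (Pcl t u Pt Etu)) mulr0.
  have [_ Hz _] := GP' t (Pnt t Pt).
  by rewrite Hz ?Etu // mul0r.
move/eqfail => sf; have := Pnt s Ps; rewrite sf /is_target eqxx orbT.
by [].
Qed.

Theorem lemma18 (R : realType) (S : finType) (fin fail : S) (E : rel S)
  (m : nat) (part : S -> 'I_m.+1) :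
  standing_assumptions R fin fail E ->
  mc_equivalence_partition R fin fail E part ->
  exists val : S -> S -> R,
    graph_preserving fin fail E val /\
    forall (i j : 'I_m.+1) (si sj : S), (i < j)%N -> part si = i -> part sj = j ->
      Pval fin fail val si < Pval fin fail val sj.
Proof.
move=> SA PART.
have SA' := SA; case: SA' => [nff noout _ noloop card2].
case: PART => [_ Hfail Hfin Hnt Hmix].
have pfin : (part fin : nat) = m by rewrite ((Hfin fin).2 erefl).
have pfail : (part fail : nat) = 0%N by rewrite ((Hfail fail).2 erefl).
have m0 : (0 < m)%N.
  rewrite lt0n; apply/eqP => m0.
  have : part fail = ord_max by apply: val_inj; rewrite /= pfail m0.
  by move/(Hfin fail).1 => ef; move: nff; rewrite ef eqxx.
have mR : 0 < m%:R :> R by rewrite ltr0n.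
pose p (s : S) : R := (part s)%:R.
pose wt (u t : S) : R :=
  if E u t then (if part t == part u then 1 else `|p t - p u|^-1) else 0.
pose Z (u : S) : R := \sum_t wt u t.
pose val (u t : S) : R := wt u t / Z u.
pose f (s : S) : R := p s / m%:R.
have wt_ge0 : forall u t, 0 <= wt u t.
  move=> u t; rewrite /wt; case: (E u t) => //; case: ifP => _.
    exact: ler01.
  by rewrite invr_ge0.
have pne : forall u t, part t != part u -> p t - p u != 0.
  by move=> u t ne; rewrite subr_eq0 /p eqr_nat.
have wt_pos : forall u t, E u t -> 0 < wt u t.
  move=> u t Eut; rewrite /wt Eut; case: ifP => // /negbT ne.
  by rewrite invr_gt0 normr_gt0 pne.
have succ : forall u, ~~ is_target fin fail u -> exists t, E u t.
  move=> u nu; have : (0 < #|[set t | E u t]%SET|)%N by rewrite card2.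
  by case/card_gt0P => t; rewrite inE => Et; exists t.
have Zpos : forall u, ~~ is_target fin fail u -> 0 < Z u.
  move=> u nu; have [t Et] := succ u nu.
  rewrite /Z (bigD1 t) //=.
  have := wt_pos u t Et.
  have : 0 <= \sum_(i | i != t) wt u i by apply: sumr_ge0 => i _.
  lra.
have GP : graph_preserving fin fail E val.
  move=> u nu; split.
  - by move=> t Et; rewrite /val divr_gt0 // ?wt_pos ?Zpos.
  - by move=> t /negPf nE; rewrite /val /wt nE mul0r.
  - by rewrite /val -mulr_suml divff // gt_eqF ?Zpos.
exists val; split => //.
have key : forall u, ~~ is_target fin fail u -> \sum_t wt u t * (p t - p u) = 0.
  move=> u nu; case: (Hmix u) => [[v [w [Euv Euw lv lw]]]|same]; last first.
    apply: big1 => t _; rewrite /wt; case Et: (E u t); last by rewrite mul0r.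
    by rewrite /p (same t Et) subrr mulr0.
  have nvw : v != w.
    by apply/eqP => evw; move: lv lw; rewrite evw => a b; move: (ltn_trans a b); rewrite ltnn.
  have Hset : forall t, E u t -> t = v \/ t = w.
    move=> t Et.
    have : [set v; w]%SET == [set t | E u t]%SET.
      rewrite eqEcard card2 // cards2 nvw leqnn andbT.
      by apply/fintype.subsetP => x; rewrite !inE => /orP[] /eqP ->.
    move/eqP/setP/(_ t); rewrite !inE Et => /orP[] /eqP ->; by [left|right].
  rewrite (bigD1 v) //= (bigD1 w) /=; last by rewrite eq_sym.
  rewrite big1; last first.
    move=> t /andP[tv tw]; rewrite /wt; case Et: (E u t); last by rewrite mul0r.
    by case: (Hset t Et) => e; [move: tv | move: tw]; rewrite e eqxx.
  have neqv : part v != part u by rewrite neq_ltn lv.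
  have neqw : part w != part u by rewrite neq_ltn lw orbT.
  rewrite /wt Euv Euw (negPf neqv) (negPf neqw) addr0.
  have nv : p v - p u < 0 by rewrite subr_lt0 /p ltr_nat.
  have pw : 0 < p w - p u by rewrite subr_gt0 /p ltr_nat.
  rewrite (ltr0_norm nv) (gtr0_norm pw) invrN mulNr !mulVf ?(pne u v neqv) ?(pne u w neqw) //.
  by rewrite addNr.

have harm : forall u, ~~ is_target fin fail u -> \sum_t val u t * f t = f u.
  move=> u nu.
  have e1 : \sum_t val u t * f t = (\sum_t wt u t * p t) * ((Z u)^-1 * (m%:R)^-1).
    rewrite mulr_suml; apply: eq_bigr => t _; rewrite /val /f; ring.
  have e2 : \sum_t wt u t * p t = p u * Z u.
    have := key u nu.
    under eq_bigr => t _ do rewrite mulrBr.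
    rewrite sumrB -mulr_suml => /eqP; rewrite subr_eq0 => /eqP ->.
    by rewrite mulrC.
  rewrite e1 e2 mulrA mulfK //; apply: lt0r_neq0; exact: Zpos.
have Peq := Pval_eq GP (reach_hn SA GP) nff.
have Pf : forall s, Pval fin fail val s = f s.
  apply: Peq => //.
  - by rewrite /f /p pfin divff // lt0r_neq0.
  - by rewrite /f /p pfail mul0r.
  - move=> s; rewrite /f divr_ge0 ?ler0n //= ler_pdivrMr // mul1r ler_nat.
    by rewrite -ltnS ltn_ord.
move=> i j si sj ij ei ej.
by rewrite !Pf /f ltr_pM2r ?invr_gt0 // /p ltr_nat ei ej.
Qed.
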